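(* Let $({\mathbf\Lambda}^\star,{\mathbf V}^\star)$ with ${\mathbf\Lambda}^\star,{\mathbf V}^\star\ge0$ be a minimizer of $F$ over pairs of entrywise nonnegative matrices. Then for every randomized prediction $\pi$ supported on the grid and satisfying $\mathcal U_s(\pi,\ell)\le\epsilon_s$ for all $\ell\in[\![L]\!]$, $s\in[K]$, we have $$\mathcal R(\pi_{{\mathbf\Lambda}^\star,{\mathbf V}^\star})\le\mathcal R(\pi)+\frac{\log(2L+1)}{\beta}.$$
   Context: Let $K\ge 2$, $d\ge1$, and let $(X,S,Y)$ be a random triple with values in $\mathbb R^d\times[K]\times\mathbb R$, $\mathbb E[Y^2]<\infty$. Put $\eta(x)=\mathbb E[Y\mid X=x]$, $p_s=\mathbb P(S=s)>0$, $\tau_s(x)=\mathbb P(S=s\mid X=x)$, $t_s(x)=1-\tau_s(x)/p_s$, $\mathbf t(x)=(t_s(x))_{s\in[K]}$. Fix $B>0$, $L\in\mathbb N$, $\beta>0$, $\boldsymbol\epsilon=(\epsilon_s)\in[0,1]^K$; $[\![L]\!]=\{-L,\dots,L\}$, $r_\ell(x)=(\eta(x)-\ell B/L)^2$. A randomized prediction is a Markov kernel $\pi$ from $\mathbb R^d$ to $\mathbb R$; it is supported on the grid if each $\pi(\cdot\mid x)$ is concentrated on $\{\ell B/L:\ell\in[\![L]\!]\}$, with $\pi(\ell\mid x)$ the mass at $\ell B/L$. $\mathcal R(\pi)=\mathbb E[\int(\hat y-\eta(X))^2\pi(d\hat y\mid X)]$; $\mathcal U_s(\pi,\ell)=|\mathbb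 E[\pi(\ell\mid X)\mid S=s]-\mathbb E[\pi(\ell\mid X)]|$. $\mathrm{LSE}_\beta(\mathbf w)=\beta^{-1}\log\sum_j e^{\beta w_j}$, $\sigma_j(\mathbf w)=e^{w_j}/\sum_ie^{w_i}$. For ${\mathbf\Lambda}=(\lambda_{\ell s}),{\mathbf V}=(\nu_{\ell s})$ with rows $\boldsymbol\lambda_\ell,\boldsymbol\nu_\ell\in\mathbb R^K$: $F({\mathbf\Lambda},{\mathbf V})=\mathbb E\big[\mathrm{LSE}_\beta\big((\langle\boldsymbol\lambda_\ell-\boldsymbol\nu_\ell,\mathbf t(X)\rangle-r_\ell(X))_{\ell\in[\![L]\!]}\big)\big]+\sum_{\ell}\langle\boldsymbol\lambda_\ell+\boldsymbol\nu_\ell,\boldsymbol\epsilon\rangle$, and $\pi_{{\mathbf\Lambda},{\mathbf V}}(\ell\mid x)=\sigma_\ell\big(\beta(\langle\boldsymbol\lambda_{\ell'}-\boldsymbol\nu_{\ell'},\mathbf t(x)\rangle-r_{\ell'}(x))_{\ell'\in[\![L]\!]}\big)$. *)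

(* Defs.v *)
From HB Require Import structures.
From mathcomp Require Import all_boot all_order all_algebra.
From mathcomp Require Import all_classical all_reals all_analysis.
Set Implicit Arguments. Unset Strict Implicit. Unset Printing Implicit Defensive.
Import Order.TTheory GRing.Theory Num.Theory.
Local Open Scope ring_scope.
Local Open Scope classical_set_scope.

(* Feature space R^d is modeled as d.-tuple R with the product (coordinate)
   sigma-algebra of Borel sets, i.e. the Borel sigma-algebra of R^d. *)

Definition is_cond_exp (dO : measure_display) (Omega : measurableType dO)
  (R : realType) (P : probability Omega R)
  (dT : measure_display) (T : measurableType dT)
  (X : Omega -> T) (Z : Omega -> R) (g : T -> R) : Prop :=
  [/\ measurable_fun setT g,
      P.-integrable setT (fun w => (g (X w))%:E) &
      forall A : set T, measurable A ->
        (\int[P]_(w in X @^-1` A) (Z w)%:E = \int[P]_(w in X @^-1` A) (g (X w))%:E)%E].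

Definition pS (dO : measure_display) (Omega : measurableType dO)
  (R : realType) (P : probability Omega R) (K : nat) (S : Omega -> 'I_K)
  (s : 'I_K) : R := fine (P (S @^-1` [set s])).

Definition tfun (dO : measure_display) (Omega : measurableType dO)
  (R : realType) (P : probability Omega R) (K d : nat) (S : Omega -> 'I_K)
  (tau : 'I_K -> d.-tuple R -> R) (s : 'I_K) (x : d.-tuple R) : R :=
  1 - tau s x / pS P S s.

(* grid index l : 'I_(2L+1) stands for the integer l - L in [[L]];
   grid point l B / L *)
Definition gridpt (R : realType) (L : nat) (B : R) (l : 'I_(2 * L).+1) : R :=
  ((l : nat)%:R - L%:R) * B / L%:R.

Definition rfun (R : realType) (d L : nat) (B : R) (eta : d.-tuple R -> R)
  (l : 'I_(2 * L).+1) (x : d.-tuple R) : R :=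
  (eta x - gridpt B l) ^+ 2.

Definition LSE (R : realType) (n : nat) (beta : R) (w : 'I_n -> R) : R :=
  beta^-1 * ln (\sum_(j < n) expR (beta * w j)).

Definition softmax (R : realType) (n : nat) (w : 'I_n -> R) (j : 'I_n) : R :=
  expR (w j) / \sum_(i < n) expR (w i).

Definition score (dO : measure_display) (Omega : measurableType dO)
  (R : realType) (P : probability Omega R) (d K L : nat) (S : Omega -> 'I_K)
  (eta : d.-tuple R -> R) (tau : 'I_K -> d.-tuple R -> R) (B : R)
  (Lam V : 'M[R]_((2 * L).+1, K)) (l : 'I_(2 * L).+1) (x : d.-tuple R) : R :=
  \sum_(s < K) (Lam l s - V l s) * tfun P S tau s x - rfun B eta l x.

Definition Fobj (dO : measure_display) (Omega : measurableType dO)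
  (R : realType) (P : probability Omega R) (d K L : nat)
  (X : Omega -> d.-tuple R) (S : Omega -> 'I_K)
  (eta : d.-tuple R -> R) (tau : 'I_K -> d.-tuple R -> R) (B beta : R)
  (eps : 'I_K -> R) (Lam V : 'M[R]_((2 * L).+1, K)) : \bar R :=
  (\int[P]_w (LSE beta (fun l => score P S eta tau B Lam V l (X w)))%:E
   + (\sum_(l < (2 * L).+1) \sum_(s < K) (Lam l s + V l s) * eps s)%:E)%E.

Definition piLV (dO : measure_display) (Omega : measurableType dO)
  (R : realType) (P : probability Omega R) (d K L : nat) (S : Omega -> 'I_K)
  (eta : d.-tuple R -> R) (tau : 'I_K -> d.-tuple R -> R) (B beta : R)
  (Lam V : 'M[R]_((2 * L).+1, K)) (x : d.-tuple R) (l : 'I_(2 * L).+1) : R :=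
  softmax (fun l' => beta * score P S eta tau B Lam V l' x) l.

(* A randomized prediction supported on the grid {l B / L : l in [[L]]}:
   a Markov kernel from R^d concentrated on the grid, given by its masses
   pi x l at the grid points (measurable in x, nonnegative, summing to 1). *)
Definition grid_kernel (R : realType) (d L : nat)
  (pi : d.-tuple R -> 'I_(2 * L).+1 -> R) : Prop :=
  [/\ forall l, measurable_fun setT (fun x => pi x l),
      forall x l, 0 <= pi x l &
      forall x, \sum_(l < (2 * L).+1) pi x l = 1].

(* Risk R(pi) = E[ int (yhat - eta(X))^2 pi(dyhat | X) ]
   = E[ sum_l pi(l | X) r_l(X) ] for pi supported on the grid. *)
Definition risk (dO : measure_display) (Omega : measurableType dO)
  (R : realType) (P : probability Omega R) (d L : nat)
  (X : Omega -> d.-tuple R) (B : R) (eta : d.-tuple R -> R)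
  (pi : d.-tuple R -> 'I_(2 * L).+1 -> R) : \bar R :=
  (\int[P]_w (\sum_(l < (2 * L).+1) pi (X w) l * rfun B eta l (X w))%:E)%E.

(* U_s(pi, l) = | E[pi(l|X) | S = s] - E[pi(l|X)] |,
   with E[Z | S = s] = E[Z 1_{S = s}] / P(S = s). *)
Definition unfair (dO : measure_display) (Omega : measurableType dO)
  (R : realType) (P : probability Omega R) (d K L : nat)
  (X : Omega -> d.-tuple R) (S : Omega -> 'I_K)
  (pi : d.-tuple R -> 'I_(2 * L).+1 -> R) (s : 'I_K) (l : 'I_(2 * L).+1) : R :=
  `| fine (\int[P]_(w in S @^-1` [set s]) (pi (X w) l)%:E)%E / pS P S s
     - fine (\int[P]_w (pi (X w) l)%:E)%E |.

(* Main.v *)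
Require Import Defs.
From HB Require Import structures.
From mathcomp Require Import all_boot all_order all_algebra.
From mathcomp Require Import all_classical all_reals all_analysis.
From mathcomp Require Import measurable_realfun.
Import Order.TTheory GRing.Theory Num.Theory.
Import numFieldNormedType.Exports.
Local Open Scope ring_scope.
Local Open Scope classical_set_scope.
From mathcomp Require Import ring lra zify.

Section Finite.
Context {R : realType}.

Lemma jensen_exp {n} (p h : 'I_n -> R) :
  (forall j, 0 <= p j) -> \sum_j p j = 1 ->
  expR (\sum_j p j * h j) <= \sum_j p j * expR (h j).
Proof.
move=> p0 p1; set m := \sum_j p j * h j.
have H j : p j * (expR m * (1 + (h j - m))) <= p j * expR (h j).
  apply: ler_wpM2l => //.
  have -> : expR (h j) = expR m * expR (h j - m) by rewrite -expRD; congr expR; ring.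
  apply: ler_wpM2l; first exact: expR_ge0.
  exact: expR_ge1Dx.
apply: le_trans (ler_sum _ (fun j _ => H j)).
rewrite (eq_bigr (fun j => expR m * p j + expR m * (p j * h j) - expR m * m * p j));
  last by move=> j _; ring.
rewrite sumrB big_split /= -!mulr_sumr p1 -/m; lra.
Qed.

Lemma p_le1 {n} (p : 'I_n -> R) j :
  (forall j, 0 <= p j) -> \sum_j p j = 1 -> p j <= 1.
Proof.
move=> p0 p1; rewrite -p1 (bigD1 j) //= lerDl sumr_ge0 //.
Qed.

Lemma sumexp_gt0 {n} (beta : R) (w : 'I_n -> R) :
  (0 < n)%N -> 0 < \sum_j expR (beta * w j).
Proof.
move=> n0; rewrite (bigD1 (Ordinal n0)) //= ltr_pwDl ?expR_gt0 //.
by rewrite sumr_ge0 // => i _; exact: expR_ge0.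
Qed.

Lemma softmax_ge0 {n} (w : 'I_n -> R) j : 0 <= softmax w j.
Proof.
rewrite /softmax divr_ge0 ?expR_ge0 // sumr_ge0 // => i _; exact: expR_ge0.
Qed.

Lemma softmax_sum1 {n} (w : 'I_n -> R) : (0 < n)%N -> \sum_j softmax w j = 1.
Proof.
move=> n0; rewrite /softmax -mulr_suml divff //.
have := @sumexp_gt0 n 1 w n0.
under eq_bigr do rewrite mul1r.
by move=> h; rewrite gt_eqF.
Qed.

Lemma LSE_ge {n} (beta : R) (p w : 'I_n -> R) : 0 < beta ->
  (forall j, 0 <= p j) -> \sum_j p j = 1 ->
  \sum_j p j * w j <= LSE beta w.
Proof.
move=> b0 p0 p1.
have n0 : (0 < n)%N.
  case: n p w p0 p1 => // p w _; rewrite big_ord0 => /eqP; by rewrite eq_sym oner_eq0.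
rewrite /LSE ler_pdivlMl // -[X in X <= _]expRK.
rewrite ler_ln ?posrE ?expR_gt0 ?sumexp_gt0 //.
rewrite mulr_sumr.
under eq_bigr do rewrite mulrCA.
apply: le_trans (jensen_exp _ _ p0 p1) _.
apply: ler_sum => j _.
rewrite -[X in _ <= X]mul1r ler_wpM2r ?expR_ge0 //; exact: p_le1.
Qed.

Lemma LSE_grad {n} (beta : R) (w w' : 'I_n -> R) : 0 < beta -> (0 < n)%N ->
  LSE beta w + \sum_j softmax (fun l => beta * w l) j * (w' j - w j) <= LSE beta w'.
Proof.
move=> b0 n0; rewrite /LSE.
set Z := \sum_j expR (beta * w j).
have Z0 : 0 < Z by exact: sumexp_gt0.
have q0 := softmax_ge0 (fun l => beta * w l).
have q1 := softmax_sum1 (fun l => beta * w l) n0.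
have eZ : \sum_j expR (beta * w' j) =
   Z * \sum_j softmax (fun l => beta * w l) j * expR (beta * (w' j - w j)).
  rewrite mulr_sumr; apply: eq_bigr => j _.
  rewrite /softmax -/Z mulrA mulrCA divff ?gt_eqF // mulr1 -expRD; congr expR; ring.
rewrite eZ lnM ?posrE // ?ltr_pM ?Z0 //; last first.
  rewrite (lt_le_trans (expR_gt0 (\sum_j softmax (fun l => beta * w l) j * (beta * (w' j - w j))))) //.
  exact: jensen_exp.
rewrite mulrDr lerD2l ler_pdivlMl //.
rewrite -[X in X <= _]expRK ler_ln ?posrE ?expR_gt0 //; last first.
  rewrite (lt_le_trans (expR_gt0 (\sum_j softmax (fun l => beta * w l) j * (beta * (w' j - w j))))) //.
  exact: jensen_exp.
rewrite mulr_sumr; under eq_bigr do rewrite mulrCA.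
exact: jensen_exp.
Qed.

Lemma LSE_le {n} (beta : R) (w : 'I_n -> R) : 0 < beta -> (0 < n)%N ->
  LSE beta w <= \sum_j softmax (fun l => beta * w l) j * w j + ln n%:R / beta.
Proof.
move=> b0 n0; rewrite /LSE.
set Z := \sum_j expR (beta * w j).
have Z0 : 0 < Z by exact: sumexp_gt0.
set q := softmax (fun l => beta * w l).
have q1 : \sum_j q j = 1 := softmax_sum1 _ n0.
have nR : 0 < n%:R :> R by rewrite ltr0n.
have key j : q j * (ln Z - beta * w j - ln n%:R) <= q j * (Z * expR (- (beta * w j)) / n%:R - 1).
  apply: ler_wpM2l; first exact: softmax_ge0.
  have y0 : 0 < Z * expR (- (beta * w j)) / n%:R by rewrite divr_gt0 // mulr_gt0 // expR_gt0.
  have := le_ln1Dx (ltr_pwDl y0 (lexx (-1)) : -1 < Z * expR (- (beta * w j)) / n%:R - 1).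
  rewrite addrC subrK lnM ?posrE ?mulr_gt0 ?expR_gt0 ?invr_gt0 // lnM ?posrE ?expR_gt0 //.
  by rewrite expRK lnV ?posrE //.
have S1 : \sum_j q j * (ln Z - beta * w j - ln n%:R) = ln Z - ln n%:R - beta * \sum_j q j * w j.
  rewrite (eq_bigr (fun j => (ln Z - ln n%:R) * q j - beta * (q j * w j))); last by move=> j _; ring.
  by rewrite sumrB -mulr_sumr -mulr_sumr q1 mulr1.
have S2 : \sum_j q j * (Z * expR (- (beta * w j)) / n%:R - 1) = 0.
  rewrite (eq_bigr (fun j => n%:R^-1 - q j)); last first.
    move=> j _; rewrite /q /softmax -/Z.
    rewrite mulrBr mulr1; congr (_ - _).
    have ee : expR (beta * w j) * expR (- (beta * w j)) = 1 by rewrite -expRD subrr expR0.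
    rewrite -[RHS]mul1r -ee; field; by rewrite !gt_eqF ?expR_gt0.
  by rewrite sumrB q1 sumr_const card_ord -[_ *+ n]mulr_natr mulVf ?gt_eqF // subrr.
have h : \sum_j q j * (ln Z - beta * w j - ln n%:R) <= \sum_j q j * (Z * expR (- (beta * w j)) / n%:R - 1).
  by apply: ler_sum => j _; exact: key.
rewrite S1 S2 in h.
rewrite ler_pdivrMl // mulrDr mulrCA divff ?gt_eqF // mulr1; lra.
Qed.

Lemma LSE_abs {n} (beta : R) (w : 'I_n -> R) : 0 < beta -> (0 < n)%N ->
  `|LSE beta w| <= \sum_j `|w j| + ln n%:R / beta.
Proof.
move=> b0 n0.
have q0 := softmax_ge0 (fun l => beta * w l).
have q1 := softmax_sum1 (fun l => beta * w l) n0.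
have A : `|\sum_j softmax (fun l => beta * w l) j * w j| <= \sum_j `|w j|.
  apply: le_trans (ler_norm_sum _ _ _) _; apply: ler_sum => j _.
  rewrite normrM ger0_norm // -[X in _ <= X]mul1r ler_wpM2r //; exact: p_le1.
have lb := LSE_ge beta _ w b0 q0 q1.
have ub := LSE_le beta w b0 n0.
have l0 : 0 <= ln n%:R / beta.
  apply: divr_ge0; last exact: ltW.
  apply: ln_ge0; by rewrite ler1n.
rewrite ler_norml; apply/andP; split.
- move: A; rewrite ler_norml => /andP [A _]; lra.
- move: A; rewrite ler_norml => /andP [_ A]; lra.
Qed.

End Finite.


Section Integ.
Context {d} {T : measurableType d} {R : realType} (P : probability T R).

Definition Int (f : T -> R) := P.-integrable setT (EFin \o f).

Lemma Int_meas (f : T -> R) : Int f -> measurable_fun setT f.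
Proof. by move=> /integrableP [/measurable_EFinP]. Qed.

Lemma Int_dom (f g : T -> R) : measurable_fun setT f -> Int g ->
  (forall x, `|f x| <= g x) -> Int f.
Proof.
move=> mf ig fg; apply: le_integrable ig => //.
- exact/measurable_EFinP.
- move=> x _ /=; rewrite lee_fin (ger0_norm (le_trans (normr_ge0 _) (fg x))); exact: fg.
Qed.

Lemma Int_cst (c : R) : Int (fun _ => c).
Proof. exact: finite_measure_integrable_cst. Qed.

Lemma Int_D (f g : T -> R) : Int f -> Int g -> Int (fun x => f x + g x).
Proof. by move=> hf hg; exact: (integrableD _ hf hg). Qed.

Lemma Int_B (f g : T -> R) : Int f -> Int g -> Int (fun x => f x - g x).
Proof. by move=> hf hg; exact: (integrableB _ hf hg). Qed.

Lemma Int_Zl c (f : T -> R) : Int f -> Int (fun x => c * f x).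
Proof. by move=> hf; exact: (integrableZl _ c hf). Qed.

Lemma Int_sum (I : Type) (s : seq I) (f : I -> T -> R) :
  (forall i, Int (f i)) -> Int (fun x => \sum_(i <- s) f i x).
Proof.
move=> hf; rewrite /Int.
have -> : (EFin \o fun x => \sum_(i <- s) f i x) = (fun x => \sum_(i <- s) (f i x)%:E).
  by apply/funext => x /=; rewrite sumEFin.
by apply: integrable_sum => // i _; exact: hf.
Qed.

Lemma Int_Mbd (f h : T -> R) (M : R) : measurable_fun setT h -> (forall x, `|h x| <= M) -> Int f ->
  Int (fun x => h x * f x).
Proof.
move=> mh hM hf; apply: (@Int_dom _ (fun x => M * `|f x|)).
- by apply: measurable_funM => //; exact: Int_meas.
- apply: Int_Zl; apply/integrable_norm => //.
- move=> x; rewrite normrM; apply: ler_wpM2r => //.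
Qed.

Notation E f := (\int[P]_x f x).

Lemma E_D (f g : T -> R) : Int f -> Int g -> E (fun x => f x + g x) = E f + E g.
Proof. by move=> hf hg; rewrite RintegralD. Qed.

Lemma E_B (f g : T -> R) : Int f -> Int g -> E (fun x => f x - g x) = E f - E g.
Proof. by move=> hf hg; rewrite RintegralB. Qed.

Lemma E_Zl c (f : T -> R) : Int f -> E (fun x => c * f x) = c * E f.
Proof. by move=> hf; rewrite RintegralZl. Qed.

Lemma E_cst (c : R) : E (fun _ => c) = c.
Proof. rewrite Rintegral_cst // -[RHS]mulr1; congr (_ * _); rewrite -[1]/(fine 1%E); congr fine; exact: probability_setT. Qed.

Lemma E_le (f g : T -> R) : Int f -> Int g -> (forall x, f x <= g x) -> E f <= E g.
Proof. by move=> hf hg fg; apply: le_Rintegral. Qed.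

Lemma E_sum (I : Type) (s : seq I) (f : I -> T -> R) :
  (forall i, Int (f i)) -> E (fun x => \sum_(i <- s) f i x) = \sum_(i <- s) E (f i).
Proof.
move=> hf; elim: s => [|i s IH].
  under eq_Rintegral do rewrite big_nil.
  by rewrite big_nil E_cst.
under eq_Rintegral do rewrite big_cons.
by rewrite E_D ?IH ?big_cons //; exact: Int_sum.
Qed.

Lemma E_EFin (f : T -> R) : Int f -> (\int[P]_x (f x)%:E)%E = (E f)%:E.
Proof. by move=> hf; rewrite fineK //; exact: integrable_fin_num. Qed.

Lemma E_abs (f : T -> R) : Int f -> `|E f| <= E (fun x => `|f x|).
Proof. by move=> hf; apply: le_normr_Rintegral. Qed.

End Integ.


Section Count.
Context {R : realType}.

Lemma sum_lt_min (n m : nat) : \sum_(k < n) ((k < m)%N%:R : R) = (minn m n)%:R.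
Proof.
elim: n => [|n IH]; first by rewrite big_ord0 minn0.
rewrite big_ord_recr /= IH -natrD; congr (_%:R).
case: (ltnP n m) => h /=; lia.
Qed.

Lemma count_bounds (n : nat) (y : R) : (0 < n)%N -> 0 <= y <= 1 ->
  y - n%:R^-1 <= n%:R^-1 * \sum_(k < n) ((k.+1%:R / n%:R <= y)%R%:R : R) <= y.
Proof.
move=> n0 /andP [y0 y1].
have nR : 0 < n%:R :> R by rewrite ltr0n.
set m := Num.truncn (n%:R * y).
have ny0 : 0 <= n%:R * y by rewrite mulr_ge0 // ltW.
have e : forall k : 'I_n, ((k.+1%:R / n%:R <= y) = (k < m)%N).
  move=> k; rewrite ler_pdivrMr // mulrC truncn_gt_nat //.
rewrite (eq_bigr (fun k : 'I_n => ((k < m)%N%:R : R))); last by move=> k _; rewrite e.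
rewrite sum_lt_min.
have mn : (m <= n)%N.
  rewrite truncn_le_nat; apply: (le_lt_trans (y := n%:R)); last by rewrite ltr_nat.
  by rewrite -[X in _ <= X]mulr1 ler_wpM2l // ltW.
rewrite (minn_idPl mn).
have [h1 h2] : m%:R <= n%:R * y /\ n%:R * y < m.+1%:R :> R.
  by have /andP [] := truncn_itv ny0.
rewrite -natr1 in h2.
apply/andP; split.
- rewrite ler_pdivlMl // mulrBr divff ?gt_eqF //; lra.
- rewrite ler_pdivrMl //.
Qed.
End Count.

Section CE.
Context dO (Omega : measurableType dO) (R : realType) (P : probability Omega R)
  dT (T : measurableType dT) (X : Omega -> T) (Z : Omega -> R) (tau : T -> R).
Hypotheses (mX : measurable_fun setT X) (mZ : measurable_fun setT Z)
  (Z01 : forall w, 0 <= Z w <= 1) (hce : is_cond_exp P X Z tau).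

Notation E f := (\int[P]_x f x).

Lemma ce_tauX : Int P (fun w => tau (X w)).
Proof. by case: hce. Qed.

Lemma ce_Z : Int P Z.
Proof.
apply: (@Int_dom _ _ _ _ _ (fun _ => 1)) => //; first exact: Int_cst.
by move=> x; have /andP [a b] := Z01 x; rewrite ger0_norm.
Qed.

Lemma ce_set A : measurable A ->
  E (fun w => \1_A (X w) * Z w) = E (fun w => \1_A (X w) * tau (X w)).
Proof.
move=> mA; case: hce => _ _ /(_ A mA) /(congr1 fine) h.
have e (f : Omega -> R) : E (fun w => \1_A (X w) * f w) = \int[P]_(w in X @^-1` A) f w.
  rewrite [RHS]Rintegral_mkcond; apply: eq_Rintegral => w _.
  rewrite patchE indicE /=; case: (boolP (X w \in A)) => h1.
    by rewrite mem_set ?mul1r //; exact: set_mem h1.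
  rewrite memNset ?mul0r //; move=> H; move: h1; rewrite mem_set //.
by rewrite e (e (fun w => tau (X w))).
Qed.

Lemma ce_ext (g : T -> R) : measurable_fun setT g -> (forall x, 0 <= g x <= 1) ->
  E (fun w => g (X w) * Z w) = E (fun w => g (X w) * tau (X w)).
Proof.
move=> mg g01.
have mgX : measurable_fun setT (fun w => g (X w)) by exact: measurableT_comp.
have gXb : forall w, `|g (X w)| <= 1 by move=> w; have /andP [a b] := g01 (X w); rewrite ger0_norm.
have iZ := ce_Z; have it := ce_tauX.
set c := 1 + E (fun w => `|tau (X w)|).
set D := E (fun w => g (X w) * Z w) - E (fun w => g (X w) * tau (X w)).
have key : forall n : nat, (0 < n)%N -> `|D| <= c / n%:R.
  move=> n n0.
  have nR : 0 < n%:R :> R by rewrite ltr0n.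
  pose Ak (k : 'I_n) := g @^-1` `[k.+1%:R / n%:R, +oo[.
  have mAk k : measurable (Ak k).
    rewrite -[Ak k]setTI; apply: mg => //; exact: measurable_itv.
  have Akx k x : \1_(Ak k) x = ((k.+1%:R / n%:R <= g x)%R%:R : R).
    rewrite indicE /Ak.
    suff -> : (x \in g @^-1` `[k.+1%:R / n%:R, +oo[) = (k.+1%:R / n%:R <= g x) by [].
    apply/idP/idP => [/set_mem|h].
      by rewrite /= in_itv /= andbT.
    by apply: mem_set; rewrite /= in_itv /= andbT.
  pose gn x : R := n%:R^-1 * \sum_(k < n) \1_(Ak k) x.
  have gnb x : 0 <= g x - gn x <= n%:R^-1.
    have := @count_bounds _ n (g x) n0 (g01 x); rewrite /gn.
    rewrite (eq_bigr (fun k : 'I_n => \1_(Ak k) x)); last by move=> k _; rewrite Akx.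
    move=> /andP [h1 h2]; apply/andP; split; lra.
  have mI k : measurable_fun setT (fun w => \1_(Ak k) (X w) : R).
    by apply: measurableT_comp => //; exact: measurable_indic.
  have mgn : measurable_fun setT (fun w => gn (X w)).
    apply: measurable_funM => //; apply: measurable_sum => k; exact: mI.
  have I1 (f : Omega -> R) k : Int P f -> Int P (fun w => \1_(Ak k) (X w) * f w).
    move=> hf; apply: (@Int_Mbd _ _ _ P _ _ 1) => // w.
    by rewrite indicE; case: (_ \in _); rewrite ?normr1 ?normr0.
  have Egn (f : Omega -> R) : Int P f ->
      E (fun w => gn (X w) * f w) = n%:R^-1 * \sum_(k < n) E (fun w => \1_(Ak k) (X w) * f w).
    move=> hf.
    have -> : (fun w => gn (X w) * f w) = (fun w => n%:R^-1 * \sum_(k < n) (\1_(Ak k) (X w) * f w)).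
      by apply/funext => w; rewrite /gn -mulrA mulr_suml.
    rewrite E_Zl; last by apply: Int_sum => k; exact: I1.
    by rewrite E_sum // => k; exact: I1.
  have bd (f : Omega -> R) : Int P f -> Int P (fun w => (g (X w) - gn (X w)) * f w).
    move=> hf; apply: (@Int_Mbd _ _ _ P _ _ 1) => //; first exact: measurable_funB.
    move=> w; have /andP [a b] := gnb (X w).
    by rewrite ger0_norm //; apply: (le_trans b); rewrite invf_le1 // ler1n.
  have splt (f : Omega -> R) : Int P f -> E (fun w => g (X w) * f w) =
      E (fun w => (g (X w) - gn (X w)) * f w) + E (fun w => gn (X w) * f w).
    move=> hf; rewrite -E_D ?bd //; last first.
      apply: (@Int_Mbd _ _ _ P _ _ 1) => // w; have /andP [a b] := gnb (X w).
      have /andP [a' b'] := g01 (X w).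
      rewrite ger0_norm; last by rewrite /gn mulr_ge0 // ?invr_ge0 ?ler0n // sumr_ge0 // => k _; rewrite indicE ler0n.
      lra.
    by apply: eq_Rintegral => w _; ring.
  have eqgn : E (fun w => gn (X w) * Z w) = E (fun w => gn (X w) * tau (X w)).
    rewrite !Egn //; congr (_ * _); apply: eq_bigr => k _; exact: ce_set.
  have bnd (f : Omega -> R) : Int P f -> `|E (fun w => (g (X w) - gn (X w)) * f w)| <= n%:R^-1 * E (fun w => `|f w|).
    move=> hf; apply: le_trans (E_abs _ _ (bd f hf)) _.
    rewrite -E_Zl; last by apply/integrable_norm.
    apply: E_le; first by apply/integrable_norm; exact: bd.
      by apply: Int_Zl; apply/integrable_norm.
    move=> w; rewrite normrM; apply: ler_wpM2r => //.
    by have /andP [a b] := gnb (X w); rewrite ger0_norm.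
  have bZ : E (fun w => `|Z w|) <= 1.
    rewrite -[X in _ <= X](E_cst P); apply: E_le; first by apply/integrable_norm.
      exact: Int_cst.
    by move=> w; have /andP [a b] := Z01 w; rewrite ger0_norm.
  rewrite /D (splt Z) // (splt (fun w => tau (X w))) // eqgn.
  have h1 := bnd Z ce_Z; have h2 := bnd _ it.
  have h3 : n%:R^-1 * E (fun w => `|Z w|) <= n%:R^-1 by rewrite -[X in _ <= X]mulr1 ler_wpM2l // invr_ge0 ler0n.
  set u := E (fun w => (g (X w) - gn (X w)) * Z w) in h1 *.
  set v := E (fun w => (g (X w) - gn (X w)) * tau (X w)) in h2 *.
  set e := E (fun w => gn (X w) * tau (X w)).
  have -> : u + e - (v + e) = u - v by ring.
  have ce : c / n%:R = n%:R^-1 + n%:R^-1 * E (fun w => `|tau (X w)|) by rewrite /c mulrDl mul1r mulrC.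
  rewrite ce; have := ler_normB u v; lra.
have c0 : 0 < c.
  rewrite /c ltr_pwDl //; apply: Rintegral_ge0 => w _; exact: normr_ge0.
apply/eqP; rewrite -subr_eq0 -/D -normr_eq0; apply/negPn/negP => Dn0.
have Dp : 0 < `|D| by rewrite lt_def Dn0 normr_ge0.
set m := (Num.truncn (c / `|D|)).+1.
have := key m isT.
have := truncnS_gt (c / `|D|); rewrite -/m => hm.
have mR : 0 < m%:R :> R by rewrite ltr0n.
rewrite ler_pdivlMr // => hk.
move: hm; rewrite ltr_pdivrMr // => hm; lra.
Qed.
End CE.


Section Cvg.
Context {R : realType}.

Lemma cvg_sumR {I : finType} (f : I -> nat -> R) (a : I -> R) :
  (forall i, f i n @[n --> \oo] --> a i) ->
  (\sum_i f i n) @[n --> \oo] --> \sum_i a i.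
Proof.
move=> h; apply: cvg_big => //; first exact: add_continuous.
Qed.

Lemma softmax_cvg n (beta : R) (a b : 'I_n -> R) (c_ : nat -> R) : (0 < n)%N ->
  c_ k @[k --> \oo] --> (1 : R) ->
  (\sum_l softmax (fun l => beta * (c_ k * a l - b l)) l * a l) @[k --> \oo] -->
  \sum_l softmax (fun l => beta * (1 * a l - b l)) l * a l.
Proof.
move=> n0 hc.
have he i : expR (beta * (c_ k * a i - b i)) @[k --> \oo] --> expR (beta * (1 * a i - b i)).
  apply: (continuous_cvg _ (@continuous_expR R _)).
  apply: cvgMr; apply: cvgB; last exact: cvg_cst.
  by apply: cvgMl.
apply: cvg_sumR => l; apply: cvgMl; rewrite /softmax.
apply: cvgM; first exact: he.
apply: cvgV; last exact: cvg_sumR.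
by rewrite gt_eqF // -[X in 0 < X]/(\sum_i expR (beta * (1 * a i - b i))) sumexp_gt0.
Qed.
End Cvg.


Section Main.
Context (R : realType) (dO : measure_display) (Omega : measurableType dO)
  (P : probability Omega R) (d K L : nat)
  (X : Omega -> d.-tuple R) (S : Omega -> 'I_K) (Y : Omega -> R)
  (eta : d.-tuple R -> R) (tau : 'I_K -> d.-tuple R -> R)
  (B beta : R) (eps : 'I_K -> R)
  (Lam V : 'M[R]_((2 * L).+1, K)).
Hypotheses (hL : (1 <= L)%N) (hB : 0 < B) (hbeta : 0 < beta)
  (heps : forall s, 0 <= eps s <= 1)
  (mX : measurable_fun setT X)
  (mS : forall s, measurable (S @^-1` [set s]))
  (hpS : forall s, (0 < P (S @^-1` [set s]))%E)
  (hce_eta : is_cond_exp P X Y eta)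
  (hce : forall s, is_cond_exp P X (fun w => (S w == s)%:R) (tau s))
  (hLam : forall l s, 0 <= Lam l s) (hV : forall l s, 0 <= V l s)
  (hmin : forall Lam' V' : 'M[R]_((2 * L).+1, K),
     (forall l s, 0 <= Lam' l s) -> (forall l s, 0 <= V' l s) ->
     (Fobj P X S eta tau B beta eps Lam V <= Fobj P X S eta tau B beta eps Lam' V')%E).

Notation N := (2 * L).+1.
Notation E f := (\int[P]_x f x).

Definition tt s x := tfun P S tau s x.
Definition Aa (l : 'I_N) x := \sum_s (Lam l s - V l s) * tt s x.
Definition rr (l : 'I_N) x := rfun B eta l x.
Definition CC := \sum_(l < N) \sum_s (Lam l s + V l s) * eps s.
Definition ww (c : R) (l : 'I_N) x := c * Aa l x - rr l x.
Definition qq (c : R) x (l : 'I_N) := softmax (fun l => beta * ww c l x) l.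

Lemma N0 : (0 < N)%N. Proof. by []. Qed.

Lemma pS_gt0 s : 0 < pS P S s.
Proof.
apply: fine_gt0; rewrite hpS /=.
apply: (le_lt_trans (probability_le1 _ _)); [exact: mS | by rewrite ltey].
Qed.

Lemma m_eta : measurable_fun setT eta. Proof. by case: hce_eta. Qed.
Lemma m_tau s : measurable_fun setT (tau s). Proof. by case: (hce s). Qed.

Lemma m_tt s : measurable_fun setT (fun w => tt s (X w)).
Proof.
rewrite /tt /tfun; apply: measurable_funB => //.
apply: measurable_funM => //; apply: measurableT_comp => //; exact: m_tau.
Qed.

Lemma m_rr l : measurable_fun setT (fun w => rr l (X w)).
Proof.
rewrite /rr /rfun; apply: measurable_funX; apply: measurable_funB => //.
apply: measurableT_comp => //; exact: m_eta.
Qed.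

Lemma m_Aa l : measurable_fun setT (fun w => Aa l (X w)).
Proof.
rewrite /Aa; apply: measurable_sum => s; apply: measurable_funM => //; exact: m_tt.
Qed.

Lemma m_ww c l : measurable_fun setT (fun w => ww c l (X w)).
Proof. rewrite /ww; apply: measurable_funB; [apply: measurable_funM => //; exact: m_Aa | exact: m_rr]. Qed.

Lemma m_LSE c : measurable_fun setT (fun w => LSE beta (fun l => ww c l (X w))).
Proof.
rewrite /LSE; apply: measurable_funM => //; apply: measurableT_comp; first exact: measurable_ln.
apply: measurable_sum => l; apply: measurableT_comp; first exact: measurable_expR.
apply: measurable_funM => //; exact: m_ww.
Qed.

Lemma softmax_expR n (v : 'I_n -> R) j : (0 < n)%N ->
  softmax v j = expR (v j - ln (\sum_i expR (v i))).
Proof.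
move=> n0; have Z0 : 0 < \sum_i expR (v i).
  have := @sumexp_gt0 R n 1 v n0; by under eq_bigr do rewrite mul1r.
by rewrite expRD expRN lnK ?posrE.
Qed.

Lemma m_qq c l : measurable_fun setT (fun w => qq c (X w) l).
Proof.
rewrite /qq; under eq_fun do rewrite softmax_expR //.
apply: measurableT_comp; first exact: measurable_expR.
apply: measurable_funB; first by apply: measurable_funM => //; exact: m_ww.
apply: measurableT_comp; first exact: measurable_ln.
apply: measurable_sum => i; apply: measurableT_comp; first exact: measurable_expR.
apply: measurable_funM => //; exact: m_ww.
Qed.


Lemma gridpt_bd (l : 'I_N) : `|gridpt B l| <= B.
Proof.
have L0 : 0 < L%:R :> R by rewrite ltr0n.
rewrite /gridpt !normrM normfV (ger0_norm (ltW hB)) (ger0_norm (ltW L0)).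
rewrite ler_pdivrMr // mulrC; apply: ler_wpM2l; first exact: ltW.
have := ltn_ord l; rewrite ltnS => hl.
rewrite ler_norml; apply/andP; split.
- have : (0 : R) <= l%:R by rewrite ler0n. lra.
- have : l%:R <= (2 * L)%:R :> R by rewrite ler_nat.
  rewrite natrM; lra.
Qed.

Lemma rr_ge0 l x : 0 <= rr l x.
Proof. by rewrite /rr /rfun sqr_ge0. Qed.

Lemma rr_ub l x : rr l x <= 2 * eta x ^+ 2 + 2 * B ^+ 2.
Proof.
have := gridpt_bd l; rewrite /rr /rfun; set g := gridpt B l => h.
move: h; rewrite ler_norml => /andP [h1 h2].
have : g ^+ 2 <= B ^+ 2 by nra.
have : 0 <= (eta x + g) ^+ 2 by exact: sqr_ge0.
nra.
Qed.

Lemma rr_lb l x : eta x ^+ 2 / 2 - B ^+ 2 <= rr l x.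
Proof.
have := gridpt_bd l; rewrite /rr /rfun; set g := gridpt B l => h.
move: h; rewrite ler_norml => /andP [h1 h2].
have : g ^+ 2 <= B ^+ 2 by nra.
have : 0 <= (eta x - 2 * g) ^+ 2 by exact: sqr_ge0.
nra.
Qed.

Section Integrable.
Hypothesis hEta : Int P (fun w => eta (X w) ^+ 2).

Lemma Int_tt s : Int P (fun w => tt s (X w)).
Proof.
have -> : (fun w => tt s (X w)) = (fun w => 1 - (pS P S s)^-1 * tau s (X w)).
  by apply/funext => w; rewrite /tt /tfun mulrC.
apply: Int_B; first exact: Int_cst.
apply: Int_Zl; by case: (hce s).
Qed.

Lemma Int_rr l : Int P (fun w => rr l (X w)).
Proof.
apply: (@Int_dom _ _ _ P _ (fun w => 2 * eta (X w) ^+ 2 + 2 * B ^+ 2)).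
- exact: m_rr.
- apply: Int_D; [exact: Int_Zl | exact: Int_cst].
- by move=> w; rewrite ger0_norm ?rr_ge0 // rr_ub.
Qed.

Lemma Int_Aa l : Int P (fun w => Aa l (X w)).
Proof. by apply: Int_sum => s; apply: Int_Zl; exact: Int_tt. Qed.

Lemma Int_ww c l : Int P (fun w => ww c l (X w)).
Proof. apply: Int_B; [apply: Int_Zl; exact: Int_Aa | exact: Int_rr]. Qed.

Lemma Int_LSE c : Int P (fun w => LSE beta (fun l => ww c l (X w))).
Proof.
apply: (@Int_dom _ _ _ P _ (fun w => \sum_l `|ww c l (X w)| + ln N%:R / beta)).
- exact: m_LSE.
- apply: Int_D; last exact: Int_cst.
  by apply: Int_sum => l; apply/integrable_norm => //; exact: Int_ww.
- by move=> w; apply: LSE_abs.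
Qed.

Lemma Int_qA c : Int P (fun w => \sum_l qq c (X w) l * Aa l (X w)).
Proof.
apply: Int_sum => l; apply: (@Int_Mbd _ _ _ P _ _ 1); [exact: m_qq | | exact: Int_Aa].
move=> w; rewrite ger0_norm ?softmax_ge0 //; apply: p_le1; first exact: softmax_ge0.
exact: softmax_sum1.
Qed.

Lemma Int_qr c : Int P (fun w => \sum_l qq c (X w) l * rr l (X w)).
Proof.
apply: Int_sum => l; apply: (@Int_Mbd _ _ _ P _ _ 1); [exact: m_qq | | exact: Int_rr].
move=> w; rewrite ger0_norm ?softmax_ge0 //; apply: p_le1; first exact: softmax_ge0.
exact: softmax_sum1.
Qed.


Lemma score_ww c l x : score P S eta tau B (c *: Lam) (c *: V) l x = ww c l x.
Proof.
rewrite /score /ww /Aa mulr_sumr; congr (_ - _); apply: eq_bigr => s _.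
by rewrite !mxE /tt; ring.
Qed.

Lemma score1 l x : score P S eta tau B Lam V l x = ww 1 l x.
Proof. by rewrite -(score_ww 1) !scale1r. Qed.

Lemma piLV_qq x l : piLV P S eta tau B beta Lam V x l = qq 1 x l.
Proof.
rewrite /piLV /qq.
have -> : (fun l' => beta * score P S eta tau B Lam V l' x) = (fun l' => beta * ww 1 l' x).
  by apply/funext => l'; rewrite score1.
by [].
Qed.

Lemma Fobj_c c : Fobj P X S eta tau B beta eps (c *: Lam) (c *: V) =
  (E (fun w => LSE beta (fun l => ww c l (X w))) + c * CC)%:E.
Proof.
rewrite /Fobj.
have -> : (fun w => (LSE beta (fun l => score P S eta tau B (c *: Lam) (c *: V) l (X w)))%:E) =
  (fun w => (LSE beta (fun l => ww c l (X w)))%:E).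
  by apply/funext => w; congr (EFin (LSE beta _)); apply/funext => l; exact: score_ww.
rewrite E_EFin; last exact: Int_LSE.
rewrite /CC mulr_sumr; congr ((_ + _)%:E); apply: eq_bigr => l _.
rewrite mulr_sumr; apply: eq_bigr => s _; rewrite !mxE; ring.
Qed.

Lemma Fobj_1 : Fobj P X S eta tau B beta eps Lam V =
  (E (fun w => LSE beta (fun l => ww 1 l (X w))) + CC)%:E.
Proof. by rewrite -(scale1r Lam) -(scale1r V) Fobj_c mul1r. Qed.

Lemma min_c c : 0 <= c ->
  E (fun w => LSE beta (fun l => ww 1 l (X w))) + CC <=
  E (fun w => LSE beta (fun l => ww c l (X w))) + c * CC.
Proof.
move=> c0; have := hmin (c *: Lam) (c *: V).
rewrite Fobj_1 Fobj_c lee_fin; apply.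
- by move=> l s; rewrite mxE mulr_ge0.
- by move=> l s; rewrite mxE mulr_ge0.
Qed.

Lemma grad_c c : 0 <= c < 1 ->
  E (fun w => \sum_l qq c (X w) l * Aa l (X w)) + CC <= 0.
Proof.
move=> /andP [c0 c1].
have h := min_c c c0.
have pw x : LSE beta (fun l => ww c l x) + (1 - c) * \sum_l qq c x l * Aa l x
    <= LSE beta (fun l => ww 1 l x).
  have := LSE_grad beta (fun l => ww c l x) (fun l => ww 1 l x) hbeta N0.
  suff -> : \sum_j softmax (fun l => beta * ww c l x) j * (ww 1 j x - ww c j x) =
    (1 - c) * \sum_l qq c x l * Aa l x by [].
  rewrite mulr_sumr; apply: eq_bigr => j _; rewrite /qq /ww; ring.
have hi : E (fun w => LSE beta (fun l => ww c l (X w))) + (1 - c) * E (fun w => \sum_l qq c (X w) l * Aa l (X w))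
    <= E (fun w => LSE beta (fun l => ww 1 l (X w))).
  rewrite -E_Zl; last exact: Int_qA.
  rewrite -E_D; [|exact: Int_LSE| apply: Int_Zl; exact: Int_qA].
  apply: E_le; [apply: Int_D; [exact: Int_LSE| apply: Int_Zl; exact: Int_qA] | exact: Int_LSE |].
  move=> w; exact: pw.
have c1' : 0 < 1 - c by rewrite subr_gt0.
set D := E (fun w => \sum_l qq c (X w) l * Aa l (X w)) in hi *.
have : (1 - c) * (D + CC) <= 0.
  rewrite mulrDr; set F1 := E (fun w => LSE beta (fun l => ww 1 l (X w))) in h hi *.
  set F2 := E (fun w => LSE beta (fun l => ww c l (X w))) in h hi *. lra.
rewrite pmulr_rle0 //.
Qed.


Lemma lim1 : E (fun w => \sum_l qq 1 (X w) l * Aa l (X w)) + CC <= 0.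
Proof.
pose c_ (n : nat) : R := 1 - n.+1%:R^-1.
have hc n : 0 <= c_ n < 1.
  rewrite /c_; have h1 : 0 < n.+1%:R^-1 :> R by rewrite invr_gt0 ltr0n.
  have h2 : n.+1%:R^-1 <= 1 :> R by rewrite invf_le1 ?ltr0n // ler1n.
  by rewrite subr_ge0 h2 /= ltrBlDr ltrDl h1.
have cc : c_ n @[n --> \oo] --> (1 : R).
  rewrite -[X in _ --> X]subr0; apply: cvgB; first exact: cvg_cst.
  exact: cvg_harmonic.
pose u n w := \sum_l qq (c_ n) (X w) l * Aa l (X w).
pose u1 w := \sum_l qq 1 (X w) l * Aa l (X w).
pose G w := \sum_l `|Aa l (X w)|.
have bnd c w : `|\sum_l qq c (X w) l * Aa l (X w)| <= G w.
  apply: le_trans (ler_norm_sum _ _ _) _; apply: ler_sum => l _.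
  rewrite normrM ger0_norm ?softmax_ge0 // -[X in _ <= X]mul1r ler_wpM2r //.
  apply: p_le1; first exact: softmax_ge0.
  exact: softmax_sum1.
have mu n : measurable_fun setT (u n).
  apply: measurable_sum => l; apply: measurable_funM; [exact: m_qq | exact: m_Aa].
have mu1 : measurable_fun setT u1.
  apply: measurable_sum => l; apply: measurable_funM; [exact: m_qq | exact: m_Aa].
have iG : Int P G by apply: Int_sum => l; apply/integrable_norm => //; exact: Int_Aa.
have conv w : (u n w) @[n --> \oo] --> u1 w.
  exact: (softmax_cvg _ beta (fun l => Aa l (X w)) (fun l => rr l (X w)) _ N0 cc).
have mEu n : measurable_fun setT (fun w => (u n w)%:E) by apply/measurable_EFinP.
have mEu1 : measurable_fun setT (fun w => (u1 w)%:E) by apply/measurable_EFinP.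
have convE w : (u n w)%:E @[n --> \oo] --> (u1 w)%:E.
  by apply: cvg_EFin; [exact: nearW | exact: conv].
have bndE n w : (`|(u n w)%:E| <= (G w)%:E)%E by rewrite /= lee_fin; exact: bnd.
have [_ _ hlim] := @dominated_convergence _ _ _ P setT measurableT
  (fun n w => (u n w)%:E) (fun w => (u1 w)%:E) (fun w => (G w)%:E)
  mEu mEu1
  (aeW _ (fun w _ => convE w)) iG
  (aeW _ (fun w n _ => bndE n w)).
suff : E u1 <= - CC by lra.
rewrite -lee_fin -E_EFin; last exact: Int_qA.
rewrite -(cvg_lim (@ereal_hausdorff R) hlim).
apply: lime_le; first by apply/cvg_ex; eexists; exact: hlim.
apply: nearW => n /=; rewrite E_EFin; last exact: Int_qA.
rewrite lee_fin; have := grad_c (c_ n) (hc n); rewrite /u; lra.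
Qed.


Section Feasible.
Variable pi : d.-tuple R -> 'I_N -> R.
Hypotheses (hpi : grid_kernel pi) (hfair : forall l s, unfair P X S pi s l <= eps s).

Let Zs s w : R := (S w == s)%:R.

Lemma pi_meas l : measurable_fun setT (fun w => pi (X w) l).
Proof. case: hpi => m _ _; exact: (measurableT_comp (m l) mX). Qed.

Lemma pi01 x l : 0 <= pi x l <= 1.
Proof.
case: hpi => _ h0 h1; rewrite h0 /=; apply: p_le1 => //; exact: h1.
Qed.

Lemma Int_pi l : Int P (fun w => pi (X w) l).
Proof.
apply: (@Int_dom _ _ _ P _ (fun _ => 1)); [exact: pi_meas | exact: Int_cst |].
by move=> w; have /andP [a b] := pi01 (X w) l; rewrite ger0_norm.
Qed.

Lemma Int_piM (f : Omega -> R) l : Int P f -> Int P (fun w => pi (X w) l * f w).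
Proof.
move=> hf; apply: (@Int_Mbd _ _ _ P _ _ 1) => //; first exact: pi_meas.
by move=> w; have /andP [a b] := pi01 (X w) l; rewrite ger0_norm.
Qed.

Lemma mZs s : measurable_fun setT (Zs s).
Proof.
have -> : Zs s = \1_(S @^-1` [set s]).
  apply/funext => w; rewrite /Zs indicE; congr (nat_of_bool _ )%:R.
  apply/idP/idP => [/eqP h|/set_mem /= ->//]; apply: mem_set; exact: h.
exact: measurable_indic.
Qed.

Lemma Zs01 s w : 0 <= Zs s w <= 1.
Proof. by rewrite /Zs; case: (_ == _); rewrite ?lexx ?ler01. Qed.

Lemma E_pitt l s : E (fun w => pi (X w) l * tt s (X w)) =
  E (fun w => pi (X w) l) - E (fun w => pi (X w) l * Zs s w) / pS P S s.
Proof.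
have -> : (fun w => pi (X w) l * tt s (X w)) =
    (fun w => pi (X w) l - (pS P S s)^-1 * (pi (X w) l * tau s (X w))).
  by apply/funext => w; rewrite /tt /tfun; field; rewrite gt_eqF // pS_gt0.
have itau : Int P (fun w => tau s (X w)) by case: (hce s).
rewrite E_B; [|exact: Int_pi| apply: Int_Zl; exact: Int_piM].
rewrite E_Zl; last exact: Int_piM.
have mpl : measurable_fun setT (fun x => pi x l) by case: hpi => m _ _; exact: m.
rewrite (ce_ext _ _ _ _ _ _ _ _ _ mX (mZs s) (Zs01 s) (hce s) (fun x => pi x l) mpl (fun x => pi01 x l)).
by rewrite mulrC.
Qed.

Lemma unfair_eq l s : unfair P X S pi s l =
  `|E (fun w => pi (X w) l * tt s (X w))|.
Proof.
rewrite E_pitt /unfair distrC.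
have -> : fine (\int[P]_(w in S @^-1` [set s]) (pi (X w) l)%:E)%E =
    E (fun w => pi (X w) l * Zs s w).
  rewrite -[LHS]/(Rintegral P _ _) Rintegral_mkcond; apply: eq_Rintegral => w _.
  rewrite patchE /Zs; case: (boolP (w \in S @^-1` [set s])) => h1.
    by move/set_mem: h1 => /= ->; rewrite eqxx mulr1.
  case: eqP => [e|_]; last by rewrite mulr0.
  by exfalso; move/negP: h1; apply; apply: mem_set.
by [].
Qed.

Lemma wd_term l s : 0 <= (Lam l s - V l s) * E (fun w => pi (X w) l * tt s (X w)) + (Lam l s + V l s) * eps s.
Proof.
have := hfair l s; rewrite unfair_eq ler_norml => /andP [h1 h2].
set u := E (fun w => pi (X w) l * tt s (X w)) in h1 h2 *.
have := mulr_ge0 (hLam l s) (_ : 0 <= eps s + u); have := mulr_ge0 (hV l s) (_ : 0 <= eps s - u).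
move=> a b; have := a ltac:(lra); have := b ltac:(lra); nra.
Qed.

Lemma Int_piA : forall l, Int P (fun w => pi (X w) l * Aa l (X w)).
Proof. move=> l; apply: Int_piM; exact: Int_Aa. Qed.

Lemma E_piA : E (fun w => \sum_l pi (X w) l * Aa l (X w)) =
  \sum_l \sum_s (Lam l s - V l s) * E (fun w => pi (X w) l * tt s (X w)).
Proof.
rewrite E_sum; last exact: Int_piA.
apply: eq_bigr => l _.
have -> : (fun w => pi (X w) l * Aa l (X w)) =
    (fun w => \sum_s (Lam l s - V l s) * (pi (X w) l * tt s (X w))).
  apply/funext => w; rewrite /Aa mulr_sumr; apply: eq_bigr => s _; ring.
rewrite E_sum; last by move=> s; apply: Int_Zl; apply: Int_piM; exact: Int_tt.
apply: eq_bigr => s _; rewrite E_Zl //; apply: Int_piM; exact: Int_tt.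
Qed.

Lemma wd : 0 <= E (fun w => \sum_l pi (X w) l * Aa l (X w)) + CC.
Proof.
rewrite E_piA /CC -big_split /=; apply: sumr_ge0 => l _.
rewrite -big_split /=; apply: sumr_ge0 => s _; exact: wd_term.
Qed.

Hypothesis hI : Int P (fun w => \sum_l pi (X w) l * rr l (X w)).

Lemma final_int : E (fun w => \sum_l qq 1 (X w) l * rr l (X w)) <=
  E (fun w => \sum_l pi (X w) l * rr l (X w)) + ln N%:R / beta.
Proof.
have iA : Int P (fun w => \sum_l pi (X w) l * Aa l (X w)) by apply: Int_sum; exact: Int_piA.
have l1 : E (fun w => \sum_l pi (X w) l * Aa l (X w)) - E (fun w => \sum_l pi (X w) l * rr l (X w))
    <= E (fun w => LSE beta (fun l => ww 1 l (X w))).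
  rewrite -E_B //; apply: E_le; [exact: Int_B | exact: Int_LSE |].
  move=> w; case: hpi => _ p0 p1.
  apply: le_trans (LSE_ge beta _ _ hbeta (p0 (X w)) (p1 (X w))).
  rewrite -sumrB; apply: ler_sum => l _; rewrite /ww mul1r; lra.
have l2 : E (fun w => LSE beta (fun l => ww 1 l (X w))) <=
    E (fun w => \sum_l qq 1 (X w) l * Aa l (X w)) - E (fun w => \sum_l qq 1 (X w) l * rr l (X w))
    + ln N%:R / beta.
  rewrite -E_B; [|exact: Int_qA | exact: Int_qr].
  rewrite -[X in _ <= _ + X](E_cst P (ln N%:R / beta)).
  rewrite -E_D; [| apply: Int_B; [exact: Int_qA | exact: Int_qr] | exact: Int_cst].
  apply: E_le; [exact: Int_LSE | apply: Int_D; [apply: Int_B; [exact: Int_qA | exact: Int_qr] | exact: Int_cst] |].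
  move=> w; apply: le_trans (LSE_le beta _ hbeta N0) _.
  rewrite lerD2r -sumrB; apply: ler_sum => l _; rewrite /qq /ww mul1r; lra.
have l3 := lim1; have l4 := wd.
lra.
Qed.
End Feasible.

End Integrable.

Lemma main_res (pi : d.-tuple R -> 'I_N -> R) : grid_kernel pi -> (forall l s, unfair P X S pi s l <= eps s) ->
  (risk P X B eta (piLV P S eta tau B beta Lam V)
     <= risk P X B eta pi + (ln N%:R / beta)%:E)%E.
Proof.
move=> hpi hfair.
have f0 w : 0 <= \sum_l pi (X w) l * rr l (X w).
  apply: sumr_ge0 => l _; apply: mulr_ge0; last exact: rr_ge0.
  by have /andP [] := @pi01 pi hpi (X w) l.
have mf : measurable_fun setT (fun w => \sum_l pi (X w) l * rr l (X w)).
  apply: measurable_sum => l; apply: measurable_funM; [exact: pi_meas | exact: m_rr].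
case: (pselect (Int P (fun w => \sum_l pi (X w) l * rr l (X w)))) => hI.
- have hEta : Int P (fun w => eta (X w) ^+ 2).
    apply: (@Int_dom _ _ _ P _ (fun w => 2 * \sum_l pi (X w) l * rr l (X w) + 2 * B ^+ 2)).
    + by apply: measurable_funX; apply: measurableT_comp => //; exact: m_eta.
    + by apply: Int_D; [exact: Int_Zl | exact: Int_cst].
    + move=> w; rewrite ger0_norm ?sqr_ge0 //.
      have : eta (X w) ^+ 2 / 2 - B ^+ 2 <= \sum_l pi (X w) l * rr l (X w).
        case: hpi => _ p0 p1.
        have -> : eta (X w) ^+ 2 / 2 - B ^+ 2 = \sum_l pi (X w) l * (eta (X w) ^+ 2 / 2 - B ^+ 2).
          by rewrite -mulr_suml p1 mul1r.
        apply: ler_sum => l _; apply: ler_wpM2l; [exact: p0 | exact: rr_lb].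
      lra.
  rewrite /risk.
  have -> : (fun w => (\sum_l piLV P S eta tau B beta Lam V (X w) l * rfun B eta l (X w))%:E) =
      (fun w => (\sum_l qq 1 (X w) l * rr l (X w))%:E).
    by apply/funext => w; congr (EFin _); apply: eq_bigr => l _; rewrite piLV_qq.
  rewrite (E_EFin _ _ (Int_qr hEta 1)).
  rewrite -[X in (_ <= X + _)%E]/(\int[P]_w ((\sum_l pi (X w) l * rr l (X w))%:E))%E.
  rewrite (E_EFin _ _ hI) -EFinD lee_fin.
  exact: final_int.
- have inf : (\int[P]_w ((\sum_l pi (X w) l * rr l (X w))%:E) = +oo)%E.
    apply/eqP; rewrite eq_le leey /=; apply/negP => /negP; rewrite -ltNge => lt.
    apply: hI; apply/integrableP; split; first exact/measurable_EFinP.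
    under eq_integral do rewrite /= ger0_norm ?f0 //.
    exact: lt.
  rewrite /risk.
  rewrite -[X in (_ <= X + _)%E]/(\int[P]_w ((\sum_l pi (X w) l * rr l (X w))%:E))%E.
  by rewrite inf addye ?leey.
Qed.
End Main.

Theorem lemma3p3 (R : realType) (dO : measure_display) (Omega : measurableType dO)
  (P : probability Omega R) (d K L : nat)
  (X : Omega -> d.-tuple R) (S : Omega -> 'I_K) (Y : Omega -> R)
  (eta : d.-tuple R -> R) (tau : 'I_K -> d.-tuple R -> R)
  (B beta : R) (eps : 'I_K -> R)
  (Lam V : 'M[R]_((2 * L).+1, K)) :
  (2 <= K)%N -> (1 <= d)%N -> (1 <= L)%N ->
  0 < B -> 0 < beta -> (forall s, 0 <= eps s <= 1) ->
  measurable_fun setT X -> measurable_fun setT Y ->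
  (forall s, measurable (S @^-1` [set s])) ->
  P.-integrable setT (fun w => (Y w ^+ 2)%:E) ->
  (forall s, (0 < P (S @^-1` [set s]))%E) ->
  is_cond_exp P X Y eta ->
  (forall s, is_cond_exp P X (fun w => (S w == s)%:R) (tau s)) ->
  (forall l s, 0 <= Lam l s) -> (forall l s, 0 <= V l s) ->
  (forall Lam' V' : 'M[R]_((2 * L).+1, K),
     (forall l s, 0 <= Lam' l s) -> (forall l s, 0 <= V' l s) ->
     (Fobj P X S eta tau B beta eps Lam V <= Fobj P X S eta tau B beta eps Lam' V')%E) ->
  forall pi : d.-tuple R -> 'I_(2 * L).+1 -> R,
    grid_kernel pi ->
    (forall l s, unfair P X S pi s l <= eps s) ->
    (risk P X B eta (piLV P S eta tau B beta Lam V)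
       <= risk P X B eta pi + (ln ((2 * L).+1%:R) / beta)%:E)%E.
Proof.
move=> _ _ hL hB hbeta heps mX _ mS _ hpS hce_eta hce hLam hV hmin pi hpi hfair.
exact: (@main_res R dO Omega P d K L X S Y eta tau B beta eps Lam V hL hB hbeta mX mS hpS hce_eta hce hLam hV hmin pi hpi hfair).
Qed.
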